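(* Let $G$ be a topological group, let $G'$ be a separated topological group and let $f_n\colon G\to G'$, $n\in\mathbb{N}$, be a sequence of homomorphisms of topological groups. Then the following are equivalent: (a) the sequence $(f_n)_n$ converges continuously to a homomorphism $f\colon G\to G'$; (b) there exists a homomorphism of topological groups $f\colon G\to G'$ such that the sequence $(f_n-f)_n$ converges continuously to the zero homomorphism; (c) the sequence $(f_n)_n$ converges pointwise to a homomorphism of topological groups $f\colon G\to G'$, and for every open subgroup $H'$ of $G'$ there exist an open subgroup $H$ of $G$ and an integer $n_0\ge0$ such that $(f_n-f)(H)\subseteq H'$ for every $n\ge n_0$. In particular, if a sequence of homomorphisms of topological groups $(f_n)_n$ converges continuously to a homomorphism $f\colon G\to G'$, then $f$ is continuous.
   Context: Topological groups are abelian groups with a linear topology admitting a countable fundamental system of neighbourhoods of $0$ consisting of open subgroups; a homomorphism of topological groups is a continuous group homomorphism; separated means Hausdorff. For group homomorphisms $f_n,f\colon G\to G'$: $(f_n)$ converges pointwise to $f$ if for every $g\in G$ and open subgroup $H'$ of $G'$ there is $n_0$ with $f_n(g)-f(g)\in H'$ for $n\ge n_0$; $(f_n)$ converges continuously to $f$ if every $f_n$ is continuous and for every $g\in G$ and open subgroup $H'$ of $G'$ there exist an open subgroup $H$ of $G$ and $n_0$ such that $f_n(g+x)-f(g+x)\in H'$ for all $x\in H$ and all $n\ge n_0$. *)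

(* Defs.v *)
(* abelian groups are zmodType's; the linear topology is
   given by a countable fundamental system of neighbourhoods of 0 made of
   subgroups (a filter base), from which the open sets are defined. *)
From mathcomp Require Import all_boot all_algebra.
Set Implicit Arguments. Unset Strict Implicit. Unset Printing Implicit Defensive.
Import GRing.Theory.
Local Open Scope ring_scope.

Definition subgroup (G : zmodType) (H : G -> Prop) : Prop :=
  H 0 /\ (forall x y, H x -> H y -> H (x - y)).

Record lintop (G : zmodType) := LinTop {
  nbh0 : nat -> G -> Prop;
  nbh0_subgroup : forall n, subgroup (nbh0 n);
  nbh0_filter : forall n m, exists k, forall x, nbh0 k x -> nbh0 n x /\ nbh0 m x
}.

Definition is_open (G : zmodType) (T : lintop G) (A : G -> Prop) : Prop :=
  forall x, A x -> exists n, forall y, nbh0 T n y -> A (x + y).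

Definition open_subgroup (G : zmodType) (T : lintop G) (H : G -> Prop) : Prop :=
  subgroup H /\ is_open T H.

Definition separated (G : zmodType) (T : lintop G) : Prop :=
  forall x y : G, x <> y -> exists A B : G -> Prop,
    [/\ is_open T A, is_open T B, A x, B y & forall z, ~ (A z /\ B z)].

Definition grp_hom (G G' : zmodType) (f : G -> G') : Prop :=
  forall x y, f (x + y) = f x + f y.

Definition top_continuous (G G' : zmodType) (T : lintop G) (T' : lintop G')
  (f : G -> G') : Prop :=
  forall A, is_open T' A -> is_open T (fun x => A (f x)).

Definition top_hom (G G' : zmodType) (T : lintop G) (T' : lintop G')
  (f : G -> G') : Prop := grp_hom f /\ top_continuous T T' f.

Definition conv_pointwise (G G' : zmodType) (T' : lintop G')
  (fn : nat -> G -> G') (f : G -> G') : Prop :=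
  forall g H', open_subgroup T' H' ->
    exists n0, forall n, (n0 <= n)%N -> H' (fn n g - f g).

Definition conv_continuous (G G' : zmodType) (T : lintop G) (T' : lintop G')
  (fn : nat -> G -> G') (f : G -> G') : Prop :=
  (forall n, top_continuous T T' (fn n)) /\
  forall g H', open_subgroup T' H' ->
    exists H n0, open_subgroup T H /\
      forall x n, H x -> (n0 <= n)%N -> H' (fn n (g + x) - f (g + x)).

(* Main.v *)
Require Import Defs.
From mathcomp Require Import all_boot all_algebra.
Import GRing.Theory.
Local Open Scope ring_scope.

Section Aux.
Set Implicit Arguments. Unset Strict Implicit.
Variables (G G' : zmodType) (T : lintop G) (T' : lintop G').

Lemma sg0 (K : zmodType) (H : K -> Prop) : subgroup H -> H 0.
Proof. by case. Qed.

Lemma sgN (K : zmodType) (H : K -> Prop) x : subgroup H -> H x -> H (- x).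
Proof. move=> [h0 hB] hx; have := hB _ _ h0 hx; by rewrite sub0r. Qed.

Lemma sgD (K : zmodType) (H : K -> Prop) x y : subgroup H -> H x -> H y -> H (x + y).
Proof.
move=> hs hx hy; have := (proj2 hs) _ _ hx (sgN hs hy); by rewrite opprK.
Qed.

Lemma sgB (K : zmodType) (H : K -> Prop) x y : subgroup H -> H x -> H y -> H (x - y).
Proof. by move=> hs; apply: (proj2 hs). Qed.

Lemma nbh_open (K : zmodType) (S : lintop K) n : open_subgroup S (nbh0 S n).
Proof.
split; first exact: nbh0_subgroup.
move=> x hx; exists n => y hy; exact: sgD (nbh0_subgroup S n) hx hy.
Qed.

Lemma hom0 (h : G -> G') : grp_hom h -> h 0 = 0.
Proof.
move=> H; have := H 0 0; rewrite addr0 => e.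
by move: e => /(congr1 (fun z => z - h 0)); rewrite subrr addrK.
Qed.

Lemma contP (h : G -> G') : grp_hom h ->
  top_continuous T T' h <->
  (forall H', open_subgroup T' H' -> exists m, forall y, nbh0 T m y -> H' (h y)).
Proof.
move=> hh; split.
- move=> hc H' [hs ho]; have := hc _ ho 0; rewrite hom0 //.
  move=> /(_ (sg0 hs)) [m hm]; exists m => y hy; have := hm _ hy; by rewrite add0r.
- move=> hc A hA x Ax; have [n hn] := hA _ Ax.
  have [m hm] := hc _ (nbh_open T' n); exists m => y hy.
  rewrite hh; apply: hn; exact: hm.
Qed.

Lemma open_sg_nbh (K : zmodType) (S : lintop K) H : open_subgroup S H ->
  exists m, forall y, nbh0 S m y -> H y.
Proof.
move=> [hs ho]; have [m hm] := ho _ (sg0 hs); exists m => y hy.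
have := hm _ hy; by rewrite add0r.
Qed.

Lemma contB (h k : G -> G') : grp_hom h -> grp_hom k ->
  top_continuous T T' h -> top_continuous T T' k ->
  top_continuous T T' (fun x => h x - k x).
Proof.
move=> hh hk ch ck.
have hhk : grp_hom (fun x => h x - k x).
  by move=> x y; rewrite hh hk opprD addrACA.
apply/contP => // H' oH'.
have [m1 h1] := (proj1 (contP hh) ch) _ oH'.
have [m2 h2] := (proj1 (contP hk) ck) _ oH'.
have [m hm] := nbh0_filter T m1 m2.
exists m => y hy; have [y1 y2] := hm _ hy.
apply: sgB (proj1 oH') _ _; [exact: h1 | exact: h2].
Qed.

End Aux.
Arguments contP {G G'} T T' {h}.

Theorem lemma1p9 (G G' : zmodType) (T : lintop G) (T' : lintop G')
  (fn : nat -> G -> G') :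
  separated T' ->
  (forall n, top_hom T T' (fn n)) ->
  ( ((exists f, grp_hom f /\ conv_continuous T T' fn f) <->
     (exists f, top_hom T T' f /\
        conv_continuous T T' (fun n x => fn n x - f x) (fun _ => 0))) /\
    ((exists f, grp_hom f /\ conv_continuous T T' fn f) <->
     (exists f, top_hom T T' f /\ conv_pointwise T' fn f /\
        forall H', open_subgroup T' H' ->
          exists H n0, open_subgroup T H /\
            forall n x, (n0 <= n)%N -> H x -> H' (fn n x - f x))) ) /\
  (forall f, grp_hom f -> conv_continuous T T' fn f -> top_continuous T T' f).
Proof.
move=> _ hfn.
have P3 : forall f, grp_hom f -> conv_continuous T T' fn f -> top_continuous T T' f.
  move=> f hf [cn cc]; apply/contP => // H' oH'.
  have [H [n0 [oH hH]]] := cc 0 H' oH'.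
  have [m1 h1] := open_sg_nbh oH.
  have [m2 h2] := (proj1 (contP T T' (proj1 (hfn n0))) (proj2 (hfn n0))) _ oH'.
  have [m hm] := nbh0_filter T m1 m2.
  exists m => y hy; have [y1 y2] := hm _ hy.
  have e : f y = fn n0 y - (fn n0 y - f y) by rewrite opprB addrC subrK.
  rewrite e; apply: sgB (proj1 oH') _ _; first exact: h2.
  have := hH y n0 (h1 _ y1) (leqnn _); by rewrite add0r.
split; last exact: P3.
split; split.
- move=> [f [hf cf]]; exists f; split; first by split => //; apply: P3.
  split.
    move=> n; apply: contB => //; [exact: (proj1 (hfn n)) | exact: (proj2 (hfn n)) | exact: P3].
  move=> g H' oH'; have [H [n0 [oH hH]]] := (proj2 cf) g H' oH'.
  exists H, n0; split => // x n hx hn; rewrite subr0; exact: hH.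
- move=> [f [[hf cf] [_ cc]]]; exists f; split => //; split.
    by move=> n; exact: (proj2 (hfn n)).
  move=> g H' oH'; have [H [n0 [oH hH]]] := cc g H' oH'.
  exists H, n0; split => // x n hx hn; have := hH x n hx hn; by rewrite subr0.
- move=> [f [hf cf]]; exists f; split; first by split => //; apply: P3.
  split.
    move=> g H' oH'; have [H [n0 [oH hH]]] := (proj2 cf) g H' oH'.
    exists n0 => n hn; have := hH 0 n (sg0 (proj1 oH)) hn; by rewrite addr0.
  move=> H' oH'; have [H [n0 [oH hH]]] := (proj2 cf) 0 H' oH'.
  exists H, n0; split => // n x hn hx; have := hH x n hx hn; by rewrite add0r.
- move=> [f [[hf cf] [pw un]]]; exists f; split => //; split.
    by move=> n; exact: (proj2 (hfn n)).
  move=> g H' oH'; have [n1 h1] := pw g H' oH'.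
  have [H [n2 [oH h2]]] := un H' oH'.
  exists H, (maxn n1 n2); split => // x n hx hn.
  rewrite (proj1 (hfn n)) hf opprD addrACA.
  apply: sgD (proj1 oH') _ _.
    by apply: h1; apply: leq_trans hn; apply: leq_maxl.
  by apply: h2 => //; apply: leq_trans hn; apply: leq_maxr.
Qed.
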